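(* Every topological space with the countable chain condition (CCC) is selectively $2$-star-ccc.
   Context: No separation axioms are assumed. A space has the CCC if every pairwise disjoint family of open sets is countable. For $B\subseteq X$ and a family $\mathcal{U}$ of subsets of $X$: $\operatorname{st}^1(B,\mathcal{U})=\bigcup\{U\in\mathcal{U}:U\cap B\neq\emptyset\}$ and $\operatorname{st}^{2}(B,\mathcal{U})=\bigcup\{U\in\mathcal{U}:U\cap\operatorname{st}^1(B,\mathcal{U})\neq\emptyset\}$. A space $X$ is selectively $2$-star-ccc if for every open cover $\mathcal{U}$ of $X$ and every sequence $(\mathcal{A}_n:n\in\omega)$ of maximal pairwise disjoint families of open subsets of $X$, there is a sequence $(A_n\in\mathcal{A}_n:n\in\omega)$ with $\operatorname{st}^2(\bigcup_{n\in\omega}A_n,\mathcal{U})=X$. *)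

(* Defs.v *)
(* spaces are [topologicalType]s (no separation axioms). *)
From HB Require Import structures.
From mathcomp Require Import all_boot.
From mathcomp Require Import boolp classical_sets cardinality topology.
Set Implicit Arguments. Unset Strict Implicit. Unset Printing Implicit Defensive.
Local Open Scope classical_set_scope.

Section Defs.
Context {T : topologicalType}.

Definition disjoint_open_family (F : set (set T)) : Prop :=
  (forall A, F A -> open A) /\
  (forall A B, F A -> F B -> A <> B -> A `&` B = set0).

Definition ccc : Prop :=
  forall F : set (set T), disjoint_open_family F -> countable F.

Definition maximal_disjoint_open_family (F : set (set T)) : Prop :=
  disjoint_open_family F /\
  (forall G : set (set T), disjoint_open_family G -> F `<=` G -> G = F).

Definition open_cover (U : set (set T)) : Prop :=
  (forall V, U V -> open V) /\ \bigcup_(V in U) V = setT.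

Definition st1 (B : set T) (U : set (set T)) : set T :=
  \bigcup_(V in [set V | U V /\ V `&` B !=set0]) V.

Definition st2 (B : set T) (U : set (set T)) : set T :=
  \bigcup_(V in [set V | U V /\ V `&` st1 B U !=set0]) V.

Definition selectively_2_star_ccc : Prop :=
  forall (U : set (set T)) (A : nat -> set (set T)),
    open_cover U ->
    (forall n, maximal_disjoint_open_family (A n)) ->
    exists a : nat -> set T,
      (forall n, A n (a n)) /\ st2 (\bigcup_n a n) U = setT.

End Defs.

(* Main.v *)
Require Import Defs.
From mathcomp Require Import all_boot.
From mathcomp Require Import boolp classical_sets cardinality topology.

Local Open Scope classical_set_scope.

Lemma max_has0 {T : topologicalType} (F : set (set T)) :
  maximal_disjoint_open_family F -> F set0.
Proof.
move=> [[Fo Fd] Fm].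
have <- : F `|` [set set0] = F.
  apply: Fm; last by move=> ? ?; left.
  split.
  - by move=> a [/Fo//|->]; exact: open0.
  - move=> a b [Fa|->] [Fb|->] ab; [exact: Fd| exact: setI0 | exact: set0I | exact: set0I].
by right.
Qed.

Lemma max_meet {T : topologicalType} (F : set (set T)) (W : set T) :
  maximal_disjoint_open_family F -> open W -> W !=set0 ->
  exists a, F a /\ a `&` W !=set0.
Proof.
move=> [[Fo Fd] Fm] oW W0.
apply: contrapT => hn.
have hd : forall a, F a -> a `&` W = set0.
  move=> a Fa; apply/eqP/negbNE/negP => /set0P h; apply: hn; exists a; split => //.
have hFW : F `|` [set W] = F.
  apply: Fm; last by move=> ? ?; left.
  split.
  - by move=> a [/Fo//|->].
  - move=> a b [Fa|->] [Fb|->] ab; [exact: Fd| exact: hd | rewrite setIC; exact: hd | by []].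
have FW : F W by rewrite -hFW; right.
by move: (hd _ FW); rewrite setIid => W00; move: W0; rewrite W00 => -[].
Qed.

Theorem corollary4 (T : topologicalType) :
  @ccc T -> @selectively_2_star_ccc T.
Proof.
move=> hccc U A [Uo Ucov] Amax.
pose D := [set W : set T | open W /\ W !=set0 /\ exists V, U V /\ W `<=` V].
have [E [ED tE maxE]] := ex_maximal_disjoint_subcollection id D.
have cE : countable E.
  apply: hccc; split; first by move=> a /ED [].
  move=> a b Ea Eb ab; apply/eqP/negbNE/negP => /set0P h; apply: ab.
  exact: tE.
have [f finj] := countable_injP _ cE.
have ha : forall n, exists a, A n a /\ forall W, E W -> f W = n -> a `&` W !=set0.
  move=> n; case: (pselect (exists W, E W /\ f W = n)) => [[W [EW fW]]|nW].
    have [oW [W0 _]] := ED _ EW.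
    have [a [Aa aW]] := @max_meet _ _ _ (Amax n) oW W0.
    exists a; split => // W' EW' fW'.
    have -> : W' = W by apply: finj; rewrite ?inE //; rewrite fW fW'.
    exact: aW.
  exists set0; split; first exact: max_has0.
  by move=> W EW fW; exfalso; apply: nW; exists W.
have [a aP] := choice ha.
exists a; split; first by move=> n; case: (aP n).
apply/seteqP; split => x // _.
have : (setT : set T) x by [].
rewrite -Ucov => -[V UV Vx].
have [W [EW [y [Vy Wy]]]] : exists W, E W /\ V `&` W !=set0.
  apply: contrapT => hn.
  have EV : ~ E V.
    by move=> EV; apply: hn; exists V; split => //; exists x.
  have hd : forall W, E W -> V `&` W = set0.
    move=> W EW; apply/eqP/negbNE/negP => /set0P h; apply: hn; exists W; split => //.
  apply: (maxE (E `|` [set V])).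
  - split; first by move=> ? ?; left.
    by move=> h; apply: EV; apply: h; right.
  - move=> W [/ED//|->]; split; first exact: Uo.
    by split; [exists x | exists V; split].

  - move=> i j [Ei|->] [Ej|->] ij.
    + exact: tE.
    + by exfalso; move: ij; rewrite setIC hd // => -[].
    + by exfalso; move: ij; rewrite hd // => -[].
    + by [].
have [_ [_ [V' [UV' WV']]]] := ED _ EW.
have [z [az Wz]] := (aP (f W)).2 W EW erefl.
rewrite /st2 /st1; exists V => //.
split => //; exists y; split => //.
exists V'; [split; [exact: UV'|] | exact: (WV' y Wy)].
exists z; split; first exact: (WV' z Wz).
by exists (f W).
Qed.
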